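(* Let $\mathcal{F}_2$ be the field of (locally) analytic functions of $(x,y)$, $X=\partial/\partial x$, $Y=\partial/\partial y$, and $\mathcal{F}_2((X))$ the skew field of formal pseudodifferential operators in $X$ with coefficients in $\mathcal{F}_2$. Let $u\in\mathcal{F}_2$ and $M=Y-X^{-1}\cdot u\in\mathcal{F}_2((X))[Y]$. Let $n\ge1$ be an integer and let $P\in\mathcal{F}_2((X))$ have order $n$ and satisfy $[P,M]=0$. If $R\in\mathcal{F}_2((X))$ satisfies $R^n=P$, then $[R,M]=0$.
   Context: $\mathcal{F}_2((X))$ consists of formal series $\sum_{i\ge0}p_{n-i}X^{n-i}$ with $p_j\in\mathcal{F}_2$, $n\in\mathbb{Z}$ (order $n$ if $p_n\neq0$), multiplied by the usual composition rule of pseudodifferential operators, $X^{k}\cdot a=\sum_{j\ge0}\binom{k}{j}a^{(j)}X^{k-j}$ ($a^{(j)}$ the $j$-th $x$-derivative, generalized binomial coefficients). $\mathcal{F}_2((X))[Y]$ is the ring of polynomials in $Y$ with coefficients in $\mathcal{F}_2((X))$, where $Y$ commutes with $X$ and $Y\cdot a=aY+\partial a/\partial y$ for $a\in\mathcal{F}_2$. $[A,B]=AB-BA$. *)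

(* Defs.v *)
From mathcomp Require Import all_boot all_order all_algebra.
Set Implicit Arguments. Unset Strict Implicit. Unset Printing Implicit Defensive.
Import Order.TTheory GRing.Theory Num.Theory.
Local Open Scope ring_scope.

(* A formal pseudodifferential operator  sum_{i>=0} ps_co i * X^(ps_ord - i)
   (coefficients written on the left), coefficients in F. *)
Record psdo (F : Type) := PSDO { ps_ord : int; ps_co : nat -> F }.
Arguments PSDO {F}.

Section PS.
Variable F : fieldType.
Variable dx : F -> F.

Definition ps_coef (A : psdo F) (t : int) : F :=
  if t <= ps_ord A then ps_co A `|ps_ord A - t|%N else 0.

(* equality of series (representations are not unique) *)
Definition ps_eq (A B : psdo F) : Prop := forall t, ps_coef A t = ps_coef B t.

Definition ps_zero : psdo F := PSDO 0 (fun _ => 0).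
Definition ps_one : psdo F := PSDO 0 (fun i => (i == 0%N)%:R).
Definition ps_const (a : F) : psdo F := PSDO 0 (fun i => if i == 0%N then a else 0).
Definition ps_Xpow (k : int) : psdo F := PSDO k (fun i => (i == 0%N)%:R).

Definition ps_add (A B : psdo F) : psdo F :=
  let o := Num.max (ps_ord A) (ps_ord B) in
  PSDO o (fun i => ps_coef A (o - i%:Z) + ps_coef B (o - i%:Z)).
Definition ps_opp (A : psdo F) : psdo F := PSDO (ps_ord A) (fun i => - ps_co A i).
Definition ps_map (f : F -> F) (A : psdo F) : psdo F :=
  PSDO (ps_ord A) (fun i => f (ps_co A i)).

Definition gbinom (z : int) (l : nat) : F :=
  (\prod_(k < l) ((z - k%:Z)%:~R : F)) / (l`!)%:R.

(* composition:  X^k . a = sum_j binom(k,j) a^(j) X^(k-j) *)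
Definition ps_mul (A B : psdo F) : psdo F :=
  PSDO (ps_ord A + ps_ord B) (fun s =>
    \sum_(i < s.+1) \sum_(j < (s - i).+1)
      ps_co A i * gbinom (ps_ord A - i%:Z) (s - i - j)
        * iter (s - i - j) dx (ps_co B j)).

Definition ps_exp (A : psdo F) (n : nat) : psdo F := iter n (ps_mul A) ps_one.

Definition ps_order (A : psdo F) (n : int) : Prop :=
  ps_coef A n != 0 /\ forall t, n < t -> ps_coef A t = 0.

End PS.

Section PSY.
Variable F : fieldType.
Variables dx dy : F -> F.

(* elements of F((X))[Y]: sequences [:: A_0; A_1; ...] meaning sum_k A_k Y^k *)
Definition psy_eq (S T : seq (psdo F)) : Prop :=
  forall k, ps_eq (nth (ps_zero F) S k) (nth (ps_zero F) T k).

Definition psy_add (S T : seq (psdo F)) : seq (psdo F) :=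
  mkseq (fun k => ps_add (nth (ps_zero F) S k) (nth (ps_zero F) T k))
        (maxn (size S) (size T)).
Definition psy_opp (S : seq (psdo F)) : seq (psdo F) := map (@ps_opp F) S.

(* (A Y^k)(B Y^l) = sum_j binom(k,j) A (d_y^j B) Y^(k-j+l), using
   Y a = a Y + a_y and [X, Y] = 0 (d_y applied coefficientwise to B) *)
Definition psy_mul (S T : seq (psdo F)) : seq (psdo F) :=
  mkseq (fun m =>
    \big[@ps_add F/ps_zero F]_(k < size S) \big[@ps_add F/ps_zero F]_(l < size T)
      \big[@ps_add F/ps_zero F]_(j < k.+1 | (k - j + l == m)%N)
        ps_map (fun a => a *+ 'C(k, j))
          (ps_mul dx (nth (ps_zero F) S k)
                     (ps_map (iter j dy) (nth (ps_zero F) T l))))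
    (size S + size T).

Definition psy_comm (S T : seq (psdo F)) : seq (psdo F) :=
  psy_add (psy_mul S T) (psy_opp (psy_mul T S)).

Definition Mop (u : F) : seq (psdo F) :=
  [:: ps_opp (ps_mul dx (ps_Xpow F (-1)) (ps_const u)); ps_one F].

End PSY.

(* Main.v *)
Require Import Defs.
From mathcomp Require Import all_boot all_order all_algebra.
From mathcomp Require Import ring zify.
From Stdlib Require Import Classical.
Import Order.TTheory GRing.Theory Num.Theory.
Local Open Scope ring_scope.
Set Implicit Arguments. Unset Strict Implicit. Unset Printing Implicit Defensive.


Section GB.
Variable F : fieldType.
Hypothesis hchar : [pchar F] =i pred0.

Lemma natF_neq0 (n : nat) : (n.+1)%:R != 0 :> F.
Proof. by move/pcharf0P: hchar => ->. Qed.

Lemma factF_neq0 (n : nat) : (n`!)%:R != 0 :> F.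
Proof. have := fact_gt0 n; case: (n`!) => // k _; exact: natF_neq0. Qed.

Lemma gb0 (z : int) : gbinom F z 0 = 1.
Proof. by rewrite /gbinom big_ord0 fact0 divr1. Qed.

Lemma gbS (z : int) (l : nat) :
  gbinom F z l.+1 * (l.+1)%:R = z%:~R * gbinom F (z - 1) l.
Proof.
rewrite /gbinom big_ord_recl /= factS natrM.
have h1 := natF_neq0 l; have h2 := factF_neq0 l.
have -> : \prod_(i < l) ((z - (bump 0 i)%:Z)%:~R : F) = \prod_(i < l) ((z - 1 - i%:Z)%:~R : F).
  apply: eq_bigr => i _; congr (_ %:~R); rewrite /bump /= add1n -addn1 PoszD; lia.
rewrite subr0; field; by rewrite h2 addrC natr1 h1.
Qed.

Lemma gb_0S (l : nat) : gbinom F 0 l.+1 = 0.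
Proof.
have := gbS 0 l; rewrite mul0r => /eqP; rewrite mulf_eq0 (negbTE (natF_neq0 l)) orbF.
by move/eqP.
Qed.

Lemma vandermonde (N : nat) : forall x y : int,
  \sum_(q < N.+1) gbinom F x (N - q) * gbinom F y q = gbinom F (x + y) N.
Proof.
elim: N => [|N IH] x y.
  by rewrite big_ord1 /= !gb0 mulr1.
apply: (mulIf (natF_neq0 N)).
rewrite gbS mulr_suml.
transitivity (\sum_(q < N.+2) (gbinom F x (N.+1 - q) * (N.+1 - q)%:R * gbinom F y q
    + gbinom F x (N.+1 - q) * (gbinom F y q * q%:R))).
  apply: eq_bigr => q _.
  have E : (N.+1 - q)%:R + q%:R = N.+1%:R :> F.
    by rewrite -natrD subnK // -ltnS.
  set a := gbinom F x _; set b := gbinom F y q.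
  rewrite -E; ring.
rewrite big_split /=.
rewrite big_ord_recr /= subnn mulr0n mulr0 mul0r addr0.
rewrite [X in _ + X]big_ord_recl /= !mulr0 add0r.
under eq_bigr => q _.
  rewrite /= subSn; last by rewrite -ltnS.
  rewrite gbS -mulrA.
over.
under [X in _ + X = _]eq_bigr => q _.
  rewrite /bump /= add1n subSS gbS mulrCA.
over.
rewrite /= -!mulr_sumr !IH.
have -> : x - 1 + y = x + y - 1 by ring.
have -> : x + (y - 1) = x + y - 1 by ring.
by rewrite -mulrDl -rmorphD.
Qed.
End GB.


Section Der.
Variable F : fieldType.
Variable d : F -> F.
Hypothesis dD : forall a b : F, d (a + b) = d a + d b.
Hypothesis dM : forall a b : F, d (a * b) = d a * b + a * d b.

Lemma d0 : d 0 = 0.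
Proof. have h := dD 0 0; rewrite addr0 in h; by apply/(addrI (d 0)); rewrite -h addr0. Qed.

Lemma dN a : d (- a) = - d a.
Proof. apply/eqP; rewrite -subr_eq0 opprK -dD addNr d0 //. Qed.

Lemma d1 : d 1 = 0.
Proof. have h := dM 1 1; rewrite !mul1r !mulr1 in h; by apply/(addrI (d 1)); rewrite -h addr0. Qed.

Lemma dsum (I : Type) (r : seq I) (P : pred I) (f : I -> F) :
  d (\sum_(i <- r | P i) f i) = \sum_(i <- r | P i) d (f i).
Proof. exact: (big_morph d dD d0). Qed.

Lemma dMn a n : d (a *+ n) = d a *+ n.
Proof. elim: n => [|n IH]; first by rewrite !mulr0n d0. by rewrite !mulrS dD IH. Qed.

Lemma dnat n : d n%:R = 0.
Proof. by rewrite dMn d1 mul0rn. Qed.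

Lemma dint (z : int) : d z%:~R = 0.
Proof. case: z => n; first by rewrite dnat. by rewrite NegzE mulrNz dN dnat oppr0. Qed.

Lemma dinv c : d c = 0 -> d c^-1 = 0.
Proof.
move=> hc; have [->|nz] := eqVneq c 0; first by rewrite invr0 d0.
have := dM c c^-1; rewrite divff // d1 hc mul0r add0r => /esym/eqP.
by rewrite mulf_eq0 (negbTE nz) => /eqP.
Qed.

Lemma dprod (n : nat) (f : 'I_n -> F) : (forall i, d (f i) = 0) -> d (\prod_(i < n) f i) = 0.
Proof.
move=> h; elim/big_ind: _ => //; first exact: d1.
by move=> x y hx hy; rewrite dM hx hy mul0r mulr0 addr0.
Qed.

Lemma dgb z l : d (gbinom F z l) = 0.
Proof.
rewrite /gbinom dM dinv ?dnat // dprod ?mul0r ?mulr0 ?addr0 // => i; exact: dint.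
Qed.

Lemma dcst c a : d c = 0 -> d (c * a) = c * d a.
Proof. by move=> h; rewrite dM h mul0r add0r. Qed.

Lemma iter_d0 l : iter l d 0 = 0.
Proof. by elim: l => //= l ->; rewrite d0. Qed.

Lemma iter_dD l a b : iter l d (a + b) = iter l d a + iter l d b.
Proof. by elim: l => //= l ->; rewrite dD. Qed.

Lemma iter_dN l a : iter l d (- a) = - iter l d a.
Proof. by elim: l => //= l ->; rewrite dN. Qed.

Lemma iter_dsum l (I : Type) (r : seq I) (P : pred I) (f : I -> F) :
  iter l d (\sum_(i <- r | P i) f i) = \sum_(i <- r | P i) iter l d (f i).
Proof. exact: (big_morph (iter l d) (iter_dD l) (iter_d0 l)). Qed.

Lemma iter_dcst l c a : d c = 0 -> iter l d (c * a) = c * iter l d a.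
Proof. by move=> h; elim: l => //= l ->; rewrite dcst. Qed.

Lemma iter_d1 l : iter l.+1 d 1 = 0.
Proof. by rewrite iterSr d1 iter_d0. Qed.

Lemma leibniz m a b :
  iter m d (a * b) = \sum_(p < m.+1) 'C(m, p)%:R * (iter p d a * iter (m - p) d b).
Proof.
elim: m => [|m IH]; first by rewrite big_ord1 /= bin0 mul1r.
rewrite [LHS]/= IH dsum.
under eq_bigr => p _ do rewrite dcst ?dnat // dM.
rewrite /=.
under eq_bigr => p _ do rewrite mulrDr.
rewrite big_split /=.
rewrite [in RHS]big_ord_recl /= bin0 mul1r.
under [in RHS]eq_bigr => p _ do rewrite /bump /= add1n subSS binS natrD mulrDl.
rewrite big_split /= [RHS]addrA [LHS]addrC; congr (_ + _).
rewrite [LHS]big_ord_recl /= bin0 mul1r subn0.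
rewrite [in RHS]big_ord_recr /= bin_small // mul0r addr0.
congr (_ + _).
apply: eq_bigr => p _; rewrite /bump /= add1n; have hp := ltn_ord p.
by rewrite (_ : (m - p)%N = (m - p.+1).+1) //; lia.
Qed.

End Der.


Section PS.
Variable F : fieldType.

Lemma pcoef_ord (A : psdo F) (i : nat) : ps_coef A (ps_ord A - i%:Z) = ps_co A i.
Proof.
rewrite /ps_coef ifT; last by lia.
by congr (ps_co A _); lia.
Qed.

Lemma pcoef_gt (A : psdo F) t : ps_ord A < t -> ps_coef A t = 0.
Proof. by move=> h; rewrite /ps_coef leNgt h. Qed.

Lemma pcoef_le (A : psdo F) t : t <= ps_ord A -> ps_coef A t = ps_co A (absz (ps_ord A - t)%R).
Proof. by move=> h; rewrite /ps_coef h. Qed.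

Lemma pcoef_add (A B : psdo F) t : ps_coef (ps_add A B) t = ps_coef A t + ps_coef B t.
Proof.
rewrite /ps_coef /ps_add /=; set o := Num.max _ _.
case: ifP => h.
  rewrite -/(ps_coef A _) -/(ps_coef B _).
  by rewrite (_ : o - (absz (o - t)%R)%:Z = t) //; lia.
have h1 : ~~ (t <= ps_ord A) by lia.
have h2 : ~~ (t <= ps_ord B) by lia.
by rewrite (negbTE h1) (negbTE h2) addr0.
Qed.

Lemma pcoef_opp (A : psdo F) t : ps_coef (ps_opp A) t = - ps_coef A t.
Proof. by rewrite /ps_coef /=; case: ifP => //; rewrite oppr0. Qed.

Lemma pcoef_map (f : F -> F) (A : psdo F) t : f 0 = 0 ->
  ps_coef (ps_map f A) t = f (ps_coef A t).
Proof. by move=> h; rewrite /ps_coef /=; case: ifP. Qed.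

Lemma pcoef_zero t : ps_coef (ps_zero F) t = 0.
Proof. by rewrite /ps_coef /=; case: ifP. Qed.

Lemma pcoef_big (I : Type) (r : seq I) (P : pred I) (f : I -> psdo F) t :
  ps_coef (\big[@ps_add F/ps_zero F]_(i <- r | P i) f i) t = \sum_(i <- r | P i) ps_coef (f i) t.
Proof.
exact: (big_morph (fun A => ps_coef A t) (fun A B => pcoef_add A B t) (pcoef_zero t)).
Qed.

Lemma ps_eq_shift (X Y : psdo F) (d : nat) :
  ps_ord X = ps_ord Y + d%:Z ->
  (forall s, (s < d)%N -> ps_co X s = 0) ->
  (forall s, ps_co X (s + d) = ps_co Y s) -> ps_eq X Y.
Proof.
move=> ho h0 hs t; rewrite /ps_coef.
case: (boolP (t <= ps_ord Y)) => h1.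
  rewrite ifT; last by lia.
  rewrite -hs; congr (ps_co X _); lia.
case: (boolP (t <= ps_ord X)) => h2 //.
apply: h0; lia.
Qed.

Lemma ps_eq_co (X Y : psdo F) : ps_ord X = ps_ord Y -> (forall s, ps_co X s = ps_co Y s) -> ps_eq X Y.
Proof.
move=> ho hs; apply: (@ps_eq_shift X Y 0) => //; first by rewrite ho addr0.
by move=> s; rewrite addn0.
Qed.

Lemma ps_eq_refl (X : psdo F) : ps_eq X X. Proof. by []. Qed.
Lemma ps_eq_sym (X Y : psdo F) : ps_eq X Y -> ps_eq Y X. Proof. by move=> h t. Qed.
Lemma ps_eq_trans (X Y Z : psdo F) : ps_eq X Y -> ps_eq Y Z -> ps_eq X Z.
Proof. by move=> h1 h2 t; rewrite h1 h2. Qed.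

Definition rt (A : psdo F) (m : int) : psdo F := PSDO m (fun i => ps_coef A (m - i%:Z)).
Definition vanish (A : psdo F) (m : int) := forall t, m < t -> ps_coef A t = 0.

Lemma vanish_ord A : vanish A (ps_ord A).
Proof. by move=> t; apply: pcoef_gt. Qed.

Lemma rt_eq A m : vanish A m -> ps_eq (rt A m) A.
Proof.
move=> hv t; rewrite {1}/ps_coef /=.
case: ifP => h.
  by congr (ps_coef A _); lia.
by rewrite hv //; lia.
Qed.

Lemma vanish_eq A B m : ps_eq A B -> vanish A m -> vanish B m.
Proof. by move=> e h t ht; rewrite -e h. Qed.

Definition tri (n : nat) (T : nat -> nat -> F) :=
  \sum_(i < n.+1) \sum_(j < (n - i).+1) T i j.

Lemma psum_split (d n : nat) (f : nat -> F) :
  \sum_(i < d + n) f i = \sum_(i < d) f i + \sum_(i < n) f (d + i)%N.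
Proof. by rewrite big_split_ord. Qed.

Lemma psum_split' (N d n : nat) (f : nat -> F) : N = (d + n)%N ->
  \sum_(i < N) f i = \sum_(i < d) f i + \sum_(i < n) f (d + i)%N.
Proof. by move=> ->; rewrite big_split_ord. Qed.

Lemma tri0 n T : (forall i j, (i + j <= n)%N -> T i j = 0) -> tri n T = 0.
Proof.
move=> h; rewrite /tri big1 // => i _; rewrite big1 // => j _; apply: h.
have := ltn_ord i; have := ltn_ord j; lia.
Qed.

Lemma tri_shift_l s d T : (forall i j, (i < d)%N -> T i j = 0) ->
  tri (s + d) T = tri s (fun i j => T (d + i)%N j).
Proof.
move=> h; rewrite /tri (@psum_split' _ d s.+1 (fun i => \sum_(j < (s + d - i).+1) T i j)); last by lia.
rewrite big1 ?add0r; last by move=> i _; rewrite big1 // => j _; apply: h.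
apply: eq_bigr => i _; rewrite (_ : (s + d - (d + i)).+1 = (s - i).+1)%N //; lia.
Qed.

Lemma tri_shift_r s d T : (forall i j, (j < d)%N -> T i j = 0) ->
  tri (s + d) T = tri s (fun i j => T i (d + j)%N).
Proof.
move=> h; rewrite /tri (@psum_split' _ s.+1 d (fun i => \sum_(j < (s + d - i).+1) T i j)); last by lia.
rewrite [X in _ + X]big1 ?addr0; last first.
  move=> i _; rewrite big1 // => j _; apply: h; have := ltn_ord j; have := ltn_ord i; lia.
apply: eq_bigr => i _.
rewrite (@psum_split' _ d (s - i).+1 (fun j => T i j)); last by have := ltn_ord i; lia.
by rewrite big1 ?add0r // => j _; apply: h.
Qed.

Lemma tri_box n N T : (n <= N)%N ->
  tri n T = \sum_(i < N.+1) \sum_(j < N.+1) (if (i + j <= n)%N then T i j else 0).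
Proof.
move=> hn; rewrite /tri (big_ord_widen _ (fun i => \sum_(j < (n - i).+1) T i j) (_ : n.+1 <= N.+1)%N) //.
rewrite big_mkcond /=; apply: eq_bigr => i _.
case: ifP => hi.
  rewrite (big_ord_widen _ (fun j => T i j) (_ : (n - i).+1 <= N.+1)%N); last by lia.
  by rewrite big_mkcond; apply: eq_bigr => j _; rewrite (_ : (j < (n - i).+1)%N = (i + j <= n)%N) //; lia.
by rewrite big1 // => j _; rewrite ifF //; lia.
Qed.

End PS.


Section MUL.
Variable F : fieldType.
Hypothesis hchar : [pchar F] =i pred0.
Variable dx : F -> F.
Hypothesis dxD : forall a b : F, dx (a + b) = dx a + dx b.
Hypothesis dxM : forall a b : F, dx (a * b) = dx a * b + a * dx b.

Local Notation mul := (ps_mul dx).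

Lemma co_mul (A B : psdo F) s : ps_co (mul A B) s =
  tri s (fun i j => ps_co A i * gbinom F (ps_ord A - i%:Z) (s - i - j) * iter (s - i - j) dx (ps_co B j)).
Proof. by []. Qed.

Lemma co_opp (X : psdo F) s : ps_co (ps_opp X) s = - ps_co X s.
Proof. by []. Qed.

Lemma eq_tri n (T T' : nat -> nat -> F) : (forall i j, (i + j <= n)%N -> T i j = T' i j) -> tri n T = tri n T'.
Proof.
move=> h; apply: eq_bigr => i _; apply: eq_bigr => j _; apply: h.
have := ltn_ord i; have := ltn_ord j; lia.
Qed.

Lemma tri_add n (T1 T2 : nat -> nat -> F) : tri n (fun i j => T1 i j + T2 i j) = tri n T1 + tri n T2.
Proof. by rewrite /tri -big_split; apply: eq_bigr => i _; rewrite big_split. Qed.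

Lemma tri_opp n (T : nat -> nat -> F) : tri n (fun i j => - T i j) = - tri n T.
Proof. by rewrite /tri -sumrN; apply: eq_bigr => i _; rewrite sumrN. Qed.

Lemma pmul_rt_l A B m : vanish A m -> m <= ps_ord A -> ps_eq (mul A B) (mul (rt A m) B).
Proof.
move=> hv hm; pose d := absz (ps_ord A - m)%R.
have hA : forall i, (i < d)%N -> ps_co A i = 0.
  by move=> i hi; rewrite -pcoef_ord hv //; lia.
apply: (@ps_eq_shift _ _ _ d).
- rewrite /=; lia.
- move=> s hs; rewrite co_mul tri0 // => i j hij; rewrite hA ?mul0r //; lia.
- move=> s; rewrite co_mul tri_shift_l; last by move=> i j hi; rewrite hA ?mul0r.
  rewrite co_mul; apply: eq_tri => i j hij /=.
  rewrite -pcoef_ord; congr (ps_coef A _ * gbinom F _ _ * iter _ dx _); lia.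
Qed.

Lemma pmul_rt_r A B m : vanish B m -> m <= ps_ord B -> ps_eq (mul A B) (mul A (rt B m)).
Proof.
move=> hv hm; pose d := absz (ps_ord B - m)%R.
have hB : forall i, (i < d)%N -> ps_co B i = 0.
  by move=> i hi; rewrite -pcoef_ord hv //; lia.
apply: (@ps_eq_shift _ _ _ d).
- rewrite /=; lia.
- move=> s hs; rewrite co_mul tri0 // => i j hij; rewrite hB ?iter_d0 ?mulr0 //; lia.
- move=> s; rewrite co_mul tri_shift_r; last by move=> i j hi; rewrite hB ?iter_d0 ?mulr0.
  rewrite co_mul; apply: eq_tri => i j hij /=.
  rewrite -[ps_co B _]pcoef_ord; congr (_ * gbinom F _ _ * iter _ dx (ps_coef B _)); lia.
Qed.

Lemma vanish_min (A A' : psdo F) : ps_eq A A' -> vanish A (Num.min (ps_ord A) (ps_ord A')).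
Proof.
move=> e t ht; case: (boolP (ps_ord A < t)) => h; first exact: pcoef_gt.
by rewrite e pcoef_gt //; lia.
Qed.

Lemma pmul_eq_l A A' B : ps_eq A A' -> ps_eq (mul A B) (mul A' B).
Proof.
move=> e; set m := Num.min (ps_ord A) (ps_ord A').
have h1 := vanish_min e.
have h2 : vanish A' m by rewrite /m minC; apply: vanish_min; apply: ps_eq_sym.
have hm1 : m <= ps_ord A by lia.
have hm2 : m <= ps_ord A' by lia.
apply: ps_eq_trans (pmul_rt_l B h1 hm1) _.
apply: ps_eq_trans (ps_eq_sym (pmul_rt_l B h2 hm2)).
apply: ps_eq_co => // s; rewrite !co_mul; apply: eq_tri => i j _ /=; by rewrite e.
Qed.

Lemma pmul_eq_r A B B' : ps_eq B B' -> ps_eq (mul A B) (mul A B').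
Proof.
move=> e; set m := Num.min (ps_ord B) (ps_ord B').
have h1 := vanish_min e.
have h2 : vanish B' m by rewrite /m minC; apply: vanish_min; apply: ps_eq_sym.
have hm1 : m <= ps_ord B by lia.
have hm2 : m <= ps_ord B' by lia.
apply: ps_eq_trans (pmul_rt_r A h1 hm1) _.
apply: ps_eq_trans (ps_eq_sym (pmul_rt_r A h2 hm2)).
apply: ps_eq_co => // s; rewrite !co_mul; apply: eq_tri => i j _ /=; by rewrite e.
Qed.

Lemma pmul_eq A A' B B' : ps_eq A A' -> ps_eq B B' -> ps_eq (mul A B) (mul A' B').
Proof. move=> e1 e2; exact: ps_eq_trans (pmul_eq_l B e1) (pmul_eq_r A' e2). Qed.

Definition lead (A : psdo F) t0 a := vanish A t0 /\ ps_coef A t0 = a.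

Lemma lead_eq A B t0 a : ps_eq A B -> lead A t0 a -> lead B t0 a.
Proof. by move=> e [h1 h2]; split; [apply: vanish_eq e h1 | rewrite -e]. Qed.

Lemma lead_mul A B al be a b : lead A al a -> lead B be b -> lead (mul A B) (al + be) (a * b).
Proof.
move=> [vA cA] [vB cB].
have e : ps_eq (mul (rt A al) (rt B be)) (mul A B) by apply: pmul_eq; apply: rt_eq.
apply: lead_eq e _; split; first exact: vanish_ord.
rewrite pcoef_le // (_ : ps_ord (mul (rt A al) (rt B be)) - (al + be) = 0) ?subrr // co_mul /tri !big_ord1 /= gb0 mulr1 /= !subr0.
by rewrite cA cB.
Qed.

Lemma eq_add_co (X Y Z : psdo F) : ps_ord Y = ps_ord X -> ps_ord Z = ps_ord X ->
  (forall s, ps_co X s = ps_co Y s + ps_co Z s) -> ps_eq X (ps_add Y Z).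
Proof.
move=> hY hZ h t; rewrite pcoef_add.
case: (boolP (t <= ps_ord X)) => ht.
  by rewrite !pcoef_le ?hY ?hZ // h.
by rewrite !pcoef_gt ?addr0 ?hY ?hZ //; lia.
Qed.

Lemma pmul_addl A B C : ps_eq (mul (ps_add A B) C) (ps_add (mul A C) (mul B C)).
Proof.
set N := Num.max (ps_ord A) (ps_ord B).
have vA : vanish A N by move=> t ht; rewrite pcoef_gt //; lia.
have vB : vanish B N by move=> t ht; rewrite pcoef_gt //; lia.
have e : ps_eq (mul (ps_add A B) C) (ps_add (mul (rt A N) C) (mul (rt B N) C)).
  apply: eq_add_co => // s; rewrite !co_mul -tri_add; apply: eq_tri => i j _ /=.
  by rewrite !mulrDl.
move=> t; rewrite e !pcoef_add; congr (_ + _); apply: pmul_eq_l; exact: rt_eq.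
Qed.

Lemma pmul_addr A B C : ps_eq (mul A (ps_add B C)) (ps_add (mul A B) (mul A C)).
Proof.
set N := Num.max (ps_ord B) (ps_ord C).
have vB : vanish B N by move=> t ht; rewrite pcoef_gt //; lia.
have vC : vanish C N by move=> t ht; rewrite pcoef_gt //; lia.
have e : ps_eq (mul A (ps_add B C)) (ps_add (mul A (rt B N)) (mul A (rt C N))).
  apply: eq_add_co => // s; rewrite !co_mul -tri_add; apply: eq_tri => i j _ /=.
  by rewrite iter_dD // !mulrDr.
move=> t; rewrite e !pcoef_add; congr (_ + _); apply: pmul_eq_r; exact: rt_eq.
Qed.

Lemma pmul_oppl A B : ps_eq (mul (ps_opp A) B) (ps_opp (mul A B)).
Proof.
apply: ps_eq_co => // s; rewrite co_opp !co_mul -tri_opp; apply: eq_tri => i j _ /=.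
by rewrite !mulNr.
Qed.

Lemma pmul_oppr A B : ps_eq (mul A (ps_opp B)) (ps_opp (mul A B)).
Proof.
apply: ps_eq_co => // s; rewrite co_opp !co_mul -tri_opp; apply: eq_tri => i j _ /=.
by rewrite iter_dN // mulrN.
Qed.

Lemma pmul1l B : ps_eq (mul (ps_one F) B) B.
Proof.
apply: ps_eq_co; first by rewrite /= add0r.
move=> s; rewrite co_mul /tri big_ord_recl /= [X in _ + X]big1 ?addr0; last first.
  by move=> i _; rewrite big1 // => j _; rewrite !mul0r.
rewrite subn0; under eq_bigr => j _ do rewrite mulr1n mul1r.
rewrite big_ord_recr /= subnn gb0 mul1r /= big1 ?add0r // => j _.
have hj := ltn_ord j.
rewrite (_ : (s - j)%N = (s - j.+1).+1); last by lia.
by rewrite gb_0S // mul0r.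
Qed.

Lemma pmul1r A : ps_eq (mul A (ps_one F)) A.
Proof.
apply: ps_eq_co; first by rewrite /= addr0.
move=> s; rewrite co_mul /tri.
transitivity (\sum_(i < s.+1) ps_co A i * gbinom F (ps_ord A - i%:Z) (s - i) * iter (s - i) dx 1).
  apply: eq_bigr => i _; rewrite big_ord_recl /= subn0 big1 ?addr0 // => j _.
  by rewrite /bump /= iter_d0 // mulr0.
rewrite big_ord_recr /= subnn gb0 // mulr1 /= mulr1 big1 ?add0r // => i _.
have hi := ltn_ord i.
by rewrite (_ : (s - i)%N = (s - i.+1).+1) ?iter_d1 ?mulr0 //; lia.
Qed.

End MUL.


Section ASSOC.
Variable F : fieldType.
Hypothesis hchar : [pchar F] =i pred0.
Variable dx : F -> F.
Hypothesis dxD : forall a b : F, dx (a + b) = dx a + dx b.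
Hypothesis dxM : forall a b : F, dx (a * b) = dx a * b + a * dx b.

Local Notation mul := (ps_mul dx).
Local Notation g := (gbinom F).

Lemma prod_split' (N d n : nat) (f : nat -> F) : N = (d + n)%N ->
  \prod_(i < N) f i = (\prod_(i < d) f i) * \prod_(i < n) f (d + i)%N.
Proof. by move=> ->; rewrite big_split_ord. Qed.

Lemma gb_split (a : int) (m p : nat) : (p <= m)%N ->
  g a m * 'C(m, p)%:R = g a p * g (a - p%:Z) (m - p).
Proof.
move=> hpm; rewrite /gbinom.
rewrite (@prod_split' m p (m - p) (fun k => (a - k%:Z)%:~R)); last by lia.
have -> : \prod_(i < m - p) ((a - (p + i)%N%:Z)%:~R : F) = \prod_(i < m - p) ((a - p%:Z - i%:Z)%:~R : F).
  by apply: eq_bigr => i _; congr (_%:~R); lia.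
have hb := bin_fact hpm.
have hC : ('C(m, p))%:R != 0 :> F.
  have := bin_gt0 m p; rewrite hpm; case: ('C(m, p)) => // c _; exact: natF_neq0.
have h1 := factF_neq0 hchar p; have h2 := factF_neq0 hchar (m - p).
rewrite -hb !natrM; field.
by rewrite hC h1 h2.
Qed.

Lemma comb (a b : int) (r p : nat) : (p <= r)%N ->
  \sum_(q < (r - p).+1) g a (r - q) * 'C(r - q, p)%:R * g b q = g a p * g (a + b - p%:Z) (r - p).
Proof.
move=> hpr.
transitivity (\sum_(q < (r - p).+1) g a p * (g (a - p%:Z) ((r - p) - q) * g b q)).
  apply: eq_bigr => q _; have hq := ltn_ord q.
  rewrite gb_split; last by lia.
  by rewrite (_ : (r - q - p = r - p - q)%N) ?mulrA //; lia.
rewrite -mulr_sumr vandermonde //.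
by rewrite (_ : a - p%:Z + b = a + b - p%:Z) //; ring.
Qed.

Lemma box_col (r p : nat) (h : nat -> F) : (p <= r)%N ->
  \sum_(q < r.+1) (if (q + p <= r)%N then h q else 0) = \sum_(q < (r - p).+1) h q.
Proof.
move=> hp; rewrite (big_ord_widen _ h (_ : (r - p).+1 <= r.+1)%N); last by lia.
rewrite [RHS]big_mkcond; apply: eq_bigr => q _.
by rewrite (_ : (q + p <= r)%N = (q < (r - p).+1)%N) //; lia.
Qed.

Lemma core (a b : int) (X Y : F) (r : nat) :
  \sum_(l < r.+1) g a l * iter l dx X * (g (a + b - l%:Z) (r - l) * iter (r - l) dx Y)
  = \sum_(q < r.+1) g a (r - q) * iter (r - q) dx (X * (g b q * iter q dx Y)).
Proof.
transitivity (tri r (fun q p => g a (r - q) * g b q * 'C(r - q, p)%:R * (iter p dx X * iter (r - p) dx Y))); last first.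
  rewrite /tri; apply: eq_bigr => q _.
  rewrite (mulrCA X) (iter_dcst dxM _ _ (dgb dxD dxM b q)) (leibniz dxD dxM) !mulr_sumr.
  apply: eq_bigr => p _; have hp := ltn_ord p; have hq := ltn_ord q.
  rewrite -iterD (_ : (r - q - p + q = r - p)%N); last by lia.
  ring.
rewrite (@tri_box _ r r) // exchange_big /=; apply: eq_bigr => p _.
have hp := ltn_ord p.
rewrite (eq_bigr (fun q : 'I_r.+1 => (if (q + p <= r)%N then g a (r - q) * 'C(r - q, p)%:R * g b q else 0)
   * (iter p dx X * iter (r - p) dx Y))); last first.
  by move=> q _; case: ifP => _; [ring | rewrite mul0r].
rewrite -big_distrl /= (box_col (fun q => g a (r - q) * 'C(r - q, p)%:R * g b q)); last by lia.
rewrite comb; last by lia.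
ring.
Qed.

Lemma win (N lo r : nat) (h : nat -> F) : (lo + r <= N)%N ->
  \sum_(e < N.+1) (if (lo <= e <= lo + r)%N then h e else 0) = \sum_(l < r.+1) h (lo + l)%N.
Proof.
move=> hN.
rewrite (@psum_split' _ _ lo (N.+1 - lo) (fun e => if (lo <= e <= lo + r)%N then h e else 0)); last by lia.
rewrite big1 ?add0r; last by move=> e _; have he := ltn_ord e; rewrite ifF //; lia.
rewrite (big_ord_widen _ (fun l => h (lo + l)%N) (_ : r.+1 <= N.+1 - lo)%N); last by lia.
rewrite [RHS]big_mkcond; apply: eq_bigr => l _.
by rewrite (_ : (lo <= lo + l <= lo + r)%N = (l < r.+1)%N) //; lia.
Qed.

Lemma iter_if m (c : bool) (x : F) : iter m dx (if c then x else 0) = if c then iter m dx x else 0.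
Proof. by case: c => //; rewrite iter_d0. Qed.

Lemma pmulA (A B C : psdo F) : ps_eq (mul (mul A B) C) (mul A (mul B C)).
Proof.
apply: ps_eq_co; first by rewrite /= addrA.
move=> s.
set al := ps_ord A; set be := ps_ord B.
pose Phi (i j k : nat) := if (i + j + k <= s)%N then ps_co A i *
  \sum_(l < (s - i - j - k).+1) g (al - i%:Z) l * iter l dx (ps_co B j) *
     (g ((al - i%:Z) + (be - j%:Z) - l%:Z) ((s - i - j - k) - l) * iter ((s - i - j - k) - l) dx (ps_co C k))
  else 0.
transitivity (\sum_(i < s.+1) \sum_(j < s.+1) \sum_(k < s.+1) Phi i j k).
  rewrite co_mul (@tri_box _ s s) //.
  transitivity (\sum_(e < s.+1) \sum_(k < s.+1) \sum_(i < s.+1) \sum_(j < s.+1)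
    (if ((e + k <= s) && (i + j <= e))%N then
       (ps_co A i * g (al - i%:Z) (e - i - j) * iter (e - i - j) dx (ps_co B j)) *
       (g (ps_ord (mul A B) - e%:Z) (s - e - k) * iter (s - e - k) dx (ps_co C k)) else 0)).
    apply: eq_bigr => e _; apply: eq_bigr => k _.
    case: ifP => hek.
      rewrite co_mul (@tri_box _ e s); last by lia.
      rewrite -mulrA mulr_suml; apply: eq_bigr => i _; rewrite mulr_suml; apply: eq_bigr => j _.
      by case: ifP => _; rewrite ?mul0r.
    by rewrite big1 // => i _; rewrite big1 // => j _.
  under eq_bigr => e _ do rewrite exchange_big.
  under eq_bigr => e _ do under eq_bigr => i _ do rewrite exchange_big.
  rewrite exchange_big; apply: eq_bigr => i _.
  rewrite exchange_big; apply: eq_bigr => j _.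
  rewrite exchange_big; apply: eq_bigr => k _.
  rewrite /Phi; case: ifP => hijk; last first.
    by rewrite big1 // => e _; rewrite ifF //; lia.
  pose H1 := fun e : nat => (ps_co A i * g (al - i%:Z) (e - i - j) * iter (e - i - j) dx (ps_co B j)) *
       (g (al + be - e%:Z) (s - e - k) * iter (s - e - k) dx (ps_co C k)).
  rewrite (eq_bigr (fun e : 'I_s.+1 => if (i + j <= e <= (i + j) + (s - i - j - k))%N then
       H1 e else 0)); last first.
    by move=> e _; rewrite (_ : ((e + k <= s) && (i + j <= e))%N = (i + j <= e <= i + j + (s - i - j - k))%N) //; lia.
  rewrite (win H1); last by lia.
  rewrite mulr_sumr /H1; apply: eq_bigr => l _.
  rewrite (_ : (i + j + l - i - j = l)%N); last by lia.
  rewrite (_ : (s - (i + j + l) - k = s - i - j - k - l)%N); last by lia.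
  rewrite (_ : al + be - (i + j + l)%N%:Z = al - i%:Z + (be - j%:Z) - l%:Z); last by lia.
  by rewrite !mulrA.
symmetry.
rewrite co_mul (@tri_box _ s s) //.
transitivity (\sum_(i < s.+1) \sum_(f < s.+1) \sum_(j < s.+1) \sum_(k < s.+1)
    (if ((i + f <= s) && (j + k <= f))%N then
       ps_co A i * g (al - i%:Z) (s - i - f) * iter (s - i - f) dx
         (ps_co B j * g (be - j%:Z) (f - j - k) * iter (f - j - k) dx (ps_co C k)) else 0)).
  apply: eq_bigr => i _; apply: eq_bigr => f _.
  case: ifP => hif.
    rewrite co_mul (@tri_box _ f s); last by lia.
    rewrite iter_dsum // mulr_sumr; apply: eq_bigr => j _.
    rewrite iter_dsum // mulr_sumr; apply: eq_bigr => k _.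
    by rewrite iter_if; case: ifP => _; rewrite ?mulr0.
  by rewrite big1 // => j _; rewrite big1 // => k _.
apply: eq_bigr => i _.
rewrite exchange_big; apply: eq_bigr => j _.
rewrite exchange_big; apply: eq_bigr => k _.
rewrite /Phi; case: ifP => hijk; last first.
  by rewrite big1 // => f _; rewrite ifF //; lia.
pose H2 := fun f : nat => ps_co A i * g (al - i%:Z) (s - i - f) * iter (s - i - f) dx
         (ps_co B j * g (be - j%:Z) (f - j - k) * iter (f - j - k) dx (ps_co C k)).
rewrite (eq_bigr (fun f : 'I_s.+1 => if (j + k <= f <= (j + k) + (s - i - j - k))%N then
       H2 f else 0)); last first.
  by move=> f _; rewrite (_ : ((i + f <= s) && (j + k <= f))%N = (j + k <= f <= j + k + (s - i - j - k))%N) //; lia.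
rewrite (win H2); last by lia.
rewrite /H2 (core (al - i%:Z) (be - j%:Z) (ps_co B j) (ps_co C k) (s - i - j - k)) mulr_sumr.
apply: eq_bigr => q _.
rewrite (_ : (s - i - (j + k + q) = s - i - j - k - q)%N); last by lia.
rewrite (_ : (j + k + q - j - k = q)%N); last by lia.
by rewrite !mulrA.
Qed.

End ASSOC.


Section FIN.
Variable F : fieldType.
Hypothesis hchar : [pchar F] =i pred0.
Variables dx dy : F -> F.
Hypothesis dxD : forall a b : F, dx (a + b) = dx a + dx b.
Hypothesis dxM : forall a b : F, dx (a * b) = dx a * b + a * dx b.
Hypothesis dyD : forall a b : F, dy (a + b) = dy a + dy b.
Hypothesis dyM : forall a b : F, dy (a * b) = dy a * b + a * dy b.
Hypothesis dxy : forall a : F, dx (dy a) = dy (dx a).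

Local Notation mul := (ps_mul dx).
Local Notation g := (gbinom F).

Lemma meq_l (A A' B : psdo F) : ps_eq A A' -> ps_eq (mul A B) (mul A' B).
Proof. exact: pmul_eq_l. Qed.
Lemma meq_r (A B B' : psdo F) : ps_eq B B' -> ps_eq (mul A B) (mul A B').
Proof. exact: pmul_eq_r. Qed.
Lemma m1l (B : psdo F) : ps_eq (mul (ps_one F) B) B.
Proof. exact: pmul1l. Qed.
Lemma m1r (B : psdo F) : ps_eq (mul B (ps_one F)) B.
Proof. exact: pmul1r. Qed.
Lemma mA (A B C : psdo F) : ps_eq (mul (mul A B) C) (mul A (mul B C)).
Proof. exact: pmulA. Qed.
Lemma maddl (A B C : psdo F) : ps_eq (mul (ps_add A B) C) (ps_add (mul A C) (mul B C)).
Proof. exact: pmul_addl. Qed.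
Lemma maddr (A B C : psdo F) : ps_eq (mul A (ps_add B C)) (ps_add (mul A B) (mul A C)).
Proof. exact: pmul_addr. Qed.
Lemma moppl (A B : psdo F) : ps_eq (mul (ps_opp A) B) (ps_opp (mul A B)).
Proof. exact: pmul_oppl. Qed.
Lemma moppr (A B : psdo F) : ps_eq (mul A (ps_opp B)) (ps_opp (mul A B)).
Proof. exact: pmul_oppr. Qed.
Lemma mlead (A B : psdo F) al be a b : lead A al a -> lead B be b -> lead (mul A B) (al + be) (a * b).
Proof. exact: lead_mul. Qed.

Lemma dy_iter l a : dy (iter l dx a) = iter l dx (dy a).
Proof. by elim: l => //= l <-; rewrite dxy. Qed.

Lemma pmul_dy (A B : psdo F) :
  ps_eq (ps_map dy (mul A B)) (ps_add (mul (ps_map dy A) B) (mul A (ps_map dy B))).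
Proof.
apply: eq_add_co => // s.
rewrite [ps_co (ps_map _ _) s]/= !co_mul -tri_add /tri dsum //; apply: eq_bigr => i _.
rewrite dsum //; apply: eq_bigr => j _ /=.
by rewrite dyM (dyM (ps_co A i)) (dgb dyD dyM) dy_iter; ring.
Qed.

Lemma map_dy_eq (X X' : psdo F) : ps_eq X X' -> ps_eq (ps_map dy X) (ps_map dy X').
Proof. by move=> e t; rewrite !pcoef_map ?d0 // e. Qed.

Variable W : psdo F.

Definition Dop (X : psdo F) : psdo F :=
  ps_add (mul X W) (ps_opp (ps_add (mul W X) (mul (ps_one F) (ps_map dy X)))).

Lemma DopE X t : ps_coef (Dop X) t =
  ps_coef (mul X W) t - (ps_coef (mul W X) t + dy (ps_coef X t)).
Proof.
rewrite /Dop pcoef_add pcoef_opp pcoef_add (pmul1l hchar) pcoef_map //; exact: d0.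
Qed.

Lemma Dop_eq X X' : ps_eq X X' -> ps_eq (Dop X) (Dop X').
Proof.
move=> e t; by rewrite !DopE (meq_l _ e) (meq_r _ e) e.
Qed.

Lemma Dop_mul R B : ps_eq (Dop (mul R B)) (ps_add (mul R (Dop B)) (mul (Dop R) B)).
Proof.
move=> t; rewrite pcoef_add.
have e1 : ps_coef (mul R (Dop B)) t = ps_coef (mul R (mul B W)) t -
   (ps_coef (mul R (mul W B)) t + ps_coef (mul R (ps_map dy B)) t).
  by rewrite /Dop maddr pcoef_add moppr pcoef_opp maddr pcoef_add (meq_r _ (m1l _)).
have e2 : ps_coef (mul (Dop R) B) t = ps_coef (mul (mul R W) B) t -
   (ps_coef (mul (mul W R) B) t + ps_coef (mul (ps_map dy R) B) t).
  by rewrite /Dop maddl pcoef_add moppl pcoef_opp maddl pcoef_add (meq_l _ (m1l _)).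
rewrite e1 e2 DopE -pcoef_map; last exact: d0.
rewrite pmul_dy pcoef_add (mA R B W) -(mA W R B) (mA R W B).
ring.
Qed.

Lemma lead_add (X Y : psdo F) t0 a b : lead X t0 a -> lead Y t0 b -> lead (ps_add X Y) t0 (a + b).
Proof.
move=> [v1 c1] [v2 c2]; split; last by rewrite pcoef_add c1 c2.
by move=> t ht; rewrite pcoef_add v1 // v2 // addr0.
Qed.

Lemma lead_ch (X : psdo F) t0 t1 a : t0 = t1 -> lead X t0 a -> lead X t1 a.
Proof. by move->. Qed.

Lemma Dpow R rho r m c : lead R rho r -> lead (Dop R) m c -> forall k : nat,
  lead (ps_exp dx R k.+1) (rho * k.+1%:Z) (r ^+ k.+1) /\
  lead (Dop (ps_exp dx R k.+1)) (m + rho * k%:Z) (k.+1%:R * r ^+ k * c).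
Proof.
move=> hR hD; elim=> [|k [IH1 IH2]].
  have e : ps_eq R (ps_exp dx R 1) by apply: ps_eq_sym; apply: m1r.
  split.
    by apply: lead_eq e _; rewrite mulr1 expr1.
  apply: lead_eq (Dop_eq e) _; rewrite mulr0 addr0 expr0 mulr1 mul1r //.
split.
  change (ps_exp dx R k.+2) with (mul R (ps_exp dx R k.+1)).
  rewrite exprS; apply: (lead_ch _ (mlead hR IH1)); lia.
apply: lead_eq (ps_eq_sym (Dop_mul _ _)) _.
have h1 := mlead hR IH2.
have h2 := mlead hD IH1.
have e1 : rho + (m + rho * k%:Z) = m + rho * k.+1%:Z by lia.
have e2 : m + rho * k.+1%:Z = m + rho * k.+1%:Z by [].
rewrite e1 in h1.
have := lead_add h1 h2.
have -> : r * (k.+1%:R * r ^+ k * c) + c * r ^+ k.+1 = k.+2%:R * r ^+ k.+1 * c.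
  rewrite exprS (mulrS _ k.+1) /=; ring.
by [].
Qed.

End FIN.


Section T.
Variable F : fieldType.
Hypothesis hchar : [pchar F] =i pred0.
Variables dx dy : F -> F.
Hypothesis dxD : forall a b : F, dx (a + b) = dx a + dx b.
Hypothesis dxM : forall a b : F, dx (a * b) = dx a * b + a * dx b.
Hypothesis dyD : forall a b : F, dy (a + b) = dy a + dy b.
Hypothesis dyM : forall a b : F, dy (a * b) = dy a * b + a * dy b.
Variable u : F.

Local Notation W := (ps_opp (ps_mul dx (ps_Xpow F (-1)) (ps_const u))).

Lemma size_comm X : size (psy_comm dx dy [:: X] (Mop dx u)) = 3%N.
Proof. by rewrite /psy_comm /psy_add size_mkseq /psy_opp size_map !size_mkseq. Qed.

Lemma nth_comm X k : (k < 3)%N -> nth (ps_zero F) (psy_comm dx dy [:: X] (Mop dx u)) k =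
  ps_add (nth (ps_zero F) (psy_mul dx dy [:: X] (Mop dx u)) k)
         (ps_opp (nth (ps_zero F) (psy_mul dx dy (Mop dx u) [:: X]) k)).
Proof.
move=> hk; rewrite /psy_comm /psy_add nth_mkseq; last by rewrite /psy_opp size_map !size_mkseq.
by rewrite /psy_opp (nth_map (ps_zero F)) // size_mkseq.
Qed.

Lemma map_iter0 (Z : psdo F) : ps_map (iter 0 dy) Z = Z.
Proof. by case: Z. Qed.

Lemma comm0 X t : ps_coef (nth (ps_zero F) (psy_comm dx dy [:: X] (Mop dx u)) 0) t =
  ps_coef (Dop dx dy W X) t.
Proof.
rewrite nth_comm // pcoef_add pcoef_opp /psy_mul !nth_mkseq // !pcoef_big.
rewrite !big_ord_recl !big_ord0 /=.
rewrite !pcoef_add !pcoef_zero !pcoef_big !big_mkcond /= !big_ord_recl !big_ord0 /bump /=.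
rewrite !pcoef_map ?mul0rn ?oppr0 //= big_mkcond !big_ord_recl big_ord0 /=.
rewrite !pcoef_map ?mul0rn //= /bump /= addn0 bin0 binn !mulr1n pcoef_add !map_iter0.
rewrite (_ : ps_map (iter 1 dy) X = ps_map dy X) //.
ring.
Qed.
Lemma comm1 X t : ps_coef (nth (ps_zero F) (psy_comm dx dy [:: X] (Mop dx u)) 1) t = 0.
Proof.
rewrite nth_comm // pcoef_add pcoef_opp /psy_mul !nth_mkseq // !pcoef_big.
rewrite !big_ord_recl !big_ord0 /=.
rewrite !pcoef_add !pcoef_zero !pcoef_big !big_mkcond /= !big_ord_recl !big_ord0 /bump /=.
rewrite !pcoef_map ?mul0rn ?oppr0 //= !big_mkcond !big_ord_recl !big_ord0 /=.
rewrite addn0 big_mkcond !big_ord_recl big_ord0 /=.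
rewrite !pcoef_map ?mul0rn //= /bump /= !bin0 !mulr1n !map_iter0 (pmul1r dxD dxM) (pmul1l hchar).
ring.
Qed.

Lemma comm2 X t : ps_coef (nth (ps_zero F) (psy_comm dx dy [:: X] (Mop dx u)) 2) t = 0.
Proof.
rewrite nth_comm // pcoef_add pcoef_opp /psy_mul !nth_mkseq // !pcoef_big.
rewrite !big_ord_recl !big_ord0 /=.
rewrite !pcoef_add !pcoef_zero !pcoef_big !big_mkcond /= !big_ord_recl !big_ord0 /bump /=.
rewrite ?addn0.
rewrite !big1 ?addr0 ?subrr //.
all: by move=> [[|[|k]] hk] //=; rewrite ?addn0.
Qed.

Lemma comm_big X k : (3 <= k)%N -> nth (ps_zero F) (psy_comm dx dy [:: X] (Mop dx u)) k = ps_zero F.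
Proof. by move=> hk; rewrite nth_default // size_comm. Qed.

End T.


Section Z.
Variable F : fieldType.

Lemma top (f : int -> F) t0 N : f t0 != 0 -> (forall t, N < t -> f t = 0) ->
  exists t1, f t1 != 0 /\ forall t, t1 < t -> f t = 0.
Proof.
move=> h0 hN.
have exP : exists i : nat, f (t0 + i%:Z) != 0 by exists 0%N; rewrite addr0.
have ubP : forall i : nat, f (t0 + i%:Z) != 0 -> (i <= absz (N - t0)%R)%N.
  move=> i hi; case: (boolP (N < t0 + i%:Z)) => h; first by move: hi; rewrite hN ?eqxx.
  lia.
case: (ex_maxnP exP ubP) => i hi hmax.
exists (t0 + i%:Z); split => // t ht.
have -> : t = t0 + (absz (t - t0)%R)%:Z by lia.
apply/eqP; apply: contraT => hne.
have := hmax _ hne; lia.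
Qed.

End Z.

Unset Implicit Arguments.

Theorem lemma2 (F : fieldType) (dx dy : F -> F)
  (hchar : [pchar F] =i pred0)
  (dxD : forall a b : F, dx (a + b) = dx a + dx b)
  (dxM : forall a b : F, dx (a * b) = dx a * b + a * dx b)
  (dyD : forall a b : F, dy (a + b) = dy a + dy b)
  (dyM : forall a b : F, dy (a * b) = dy a * b + a * dy b)
  (dxy : forall a : F, dx (dy a) = dy (dx a))
  (u : F) (n : nat) (hn : (1 <= n)%N) (P R : psdo F)
  (hP : ps_order P n%:Z)
  (hPM : psy_eq (psy_comm dx dy [:: P] (Mop dx u)) [::])
  (hR : ps_eq (ps_exp dx R n) P) :
  psy_eq (psy_comm dx dy [:: R] (Mop dx u)) [::].
Proof.
set W := ps_opp (ps_mul dx (ps_Xpow F (-1)) (ps_const u)).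
have hDP : forall t, ps_coef (Dop dx dy W P) t = 0.
  by move=> t; rewrite -comm0 (hPM 0%N t) nth_nil pcoef_zero.
have hDR : forall t, ps_coef (Dop dx dy W (ps_exp dx R n)) t = 0.
  by move=> t; rewrite (Dop_eq hchar dxD dyD W hR).
move=> k t; rewrite nth_nil pcoef_zero.
case: k => [|[|[|k]]]; last by rewrite comm_big // pcoef_zero.
- rewrite comm0.
  case: (eqVneq (ps_coef (Dop dx dy W R) t) 0) => // hne; exfalso.
  have [m [hc hm]] := top hne (fun t => @pcoef_gt _ _ t).
  have hRnz : exists t', ps_coef R t' != 0.
    apply: NNPP => hall.
    have h0 : forall t', ps_coef R t' = 0.
      move=> t'; apply/eqP; apply: contraT => hh; exfalso; exact: (hall (ex_intro _ t' hh)).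
    case: hP => hPn _; move: hPn; rewrite -hR.
    case: n hn {hR hDR} => // n' _.
    change (ps_exp dx R n'.+1) with (ps_mul dx R (ps_exp dx R n')).
    set B := ps_exp dx R n'.
    have l1 : lead R (n'.+1%:Z - ps_ord B - 1) 0.
      by split; [move=> t'' _; exact: h0 | exact: h0].
    have l2 : lead B (ps_ord B) (ps_coef B (ps_ord B)) by split; [exact: vanish_ord|].
    have := lead_mul dxD l1 l2; rewrite mul0r => -[hv _].
    by rewrite hv ?eqxx //; lia.
  case: hRnz => t' ht'.
  have [rho [hr hrho]] := top ht' (fun t => @pcoef_gt _ _ t).
  have hn1 : n = n.-1.+1 by lia.
  have lR : lead R rho (ps_coef R rho) by split.
  have lD : lead (Dop dx dy W R) m (ps_coef (Dop dx dy W R) m) by split.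
  have [_ [_ hz]] := Dpow hchar dxD dxM dyD dyM dxy lR lD n.-1.
  rewrite -hn1 hDR in hz.
  have h1 : n%:R != 0 :> F by move/pcharf0P: hchar => ->; lia.
  have := mulf_neq0 (mulf_neq0 h1 (expf_neq0 n.-1 hr)) hc.
  by rewrite -hz eqxx.
- by rewrite (comm1 hchar dy dxD dxM).
- by rewrite comm2.
Qed.
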